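(* For every $\rho\ge0$, $x_0\in\mathcal X$, $\gamma\ge0$, the conditional ambiguity set $$\mathcal B_{x_0,\gamma}(\mathbb B^\infty_\rho)=\Big\{\mu_0\in\mathcal M(\mathcal Y):\exists\,\mathbb Q\in\mathbb B^\infty_\rho\text{ with }\mathbb Q(\mathcal N_\gamma(x_0)\times\mathcal Y)>0\text{ and }\mathbb Q(\mathcal N_\gamma(x_0)\times A)=\mu_0(A)\,\mathbb Q(\mathcal N_\gamma(x_0)\times\mathcal Y)\ \forall A\subseteq\mathcal Y\text{ measurable}\Big\}$$ is convex.
   Context: Continuous metrics $\mathbb D_{\mathcal X}$ on $\mathcal X\subseteq\mathbb R^n$ and $\mathbb D_{\mathcal Y}$ on $\mathcal Y\subseteq\mathbb R^m$, $\mathbb D=\mathbb D_{\mathcal X}+\mathbb D_{\mathcal Y}$; data $(\hat x_i,\hat y_i)\in\mathcal X\times\mathcal Y$, $\hat{\mathbb P}=\frac1N\sum_i\delta_{(\hat x_i,\hat y_i)}$; $\mathbb W_\infty(\mathbb Q_1,\mathbb Q_2)=\inf_{\pi\in\Pi(\mathbb Q_1,\mathbb Q_2)}\operatorname{ess\,sup}_\pi\mathbb D(\xi_1,\xi_2)$; $\mathbb B^\infty_\rho=\{\mathbb Q:\mathbb W_\infty(\mathbb Q,\hat{\mathbb P})\le\rho\}$; $\mathcal M(\mathcal Y)$ is the set of Borel probability measures on $\mathcal Y$; $\mathcal N_\gamma(x_0)=\{x\in\mathcal X:\mathbb D_{\mathcal X}(x,x_0)\le\gamma\}$. *)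

(* Defs.v *)
From HB Require Import structures.
From mathcomp Require Import all_boot all_order all_algebra.
From mathcomp Require Import all_classical all_reals all_analysis ess_sup_inf.
Set Implicit Arguments. Unset Strict Implicit. Unset Printing Implicit Defensive.
Import Order.TTheory GRing.Theory Num.Theory.
Import numFieldNormedType.Exports.
Local Open Scope classical_set_scope.
Local Open Scope ring_scope.

Definition subtop (T : topologicalType) (S : set T) :=
  initial_topology (@sval T (fun x => x \in S)).

(* the same subspace, pointed at a given element p of S (mathcomp-analysis
   measurable types must be pointed) *)
Definition psub (T : topologicalType) (S : set T) (p : T) (hp : p \in S) :=
  subtop S.
Section psub_instances.
Variables (T : topologicalType) (S : set T) (p : T) (hp : p \in S).
HB.instance Definition _ := Topological.on (psub hp).
HB.instance Definition _ := isPointed.Build (psub hp) (exist _ p hp).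
End psub_instances.

Notation borel_type T := (g_sigma_algebraType (@open T)) (only parsing).

Definition is_metric (T : Type) (R : realType) (D : T -> T -> R) :=
  (forall x y, 0 <= D x y) /\ (forall x y, D x y = 0 <-> x = y) /\
  (forall x y, D x y = D y x) /\ (forall x y z, D x z <= D x y + D y z).

Section generic.
Context {d1 d2 : measure_display} {X : measurableType d1} {Y : measurableType d2}
  {R : realType}.
Local Open Scope ereal_scope.

Definition empirical (N : nat) (data : 'I_N -> X * Y) : set (X * Y) -> \bar R :=
  fun A => ((N%:R)^-1)%:E * \sum_(i < N) \d_(data i) A.

Definition couplings (Q1 Q2 : set (X * Y) -> \bar R) :
  set (probability ((X * Y) * (X * Y))%type R) :=
  [set pi | forall A, measurable A ->
     pi (fst @^-1` A) = Q1 A /\ pi (snd @^-1` A) = Q2 A].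

Definition Winf (D : X * Y -> X * Y -> R) (Q1 Q2 : set (X * Y) -> \bar R)
  : \bar R :=
  ereal_inf [set ess_sup pi (fun p => (D p.1 p.2)%:E) | pi in couplings Q1 Q2].

Definition Winf_ball (D : X * Y -> X * Y -> R) (rho : R)
  (P : set (X * Y) -> \bar R) : set (probability (X * Y)%type R) :=
  [set Q | Winf D Q P <= rho%:E].

Definition nbhd_set (DX : X -> X -> R) (x0 : X) (gamma : R) : set X :=
  [set x | (DX x x0 <= gamma)%R].

Definition cond_ambiguity (DX : X -> X -> R) (x0 : X) (gamma : R)
  (B : set (probability (X * Y)%type R)) : set (probability Y R) :=
  [set mu0 | exists Q, B Q /\
     0 < Q (nbhd_set DX x0 gamma `*` setT) /\
     forall A, measurable A ->
       Q (nbhd_set DX x0 gamma `*` A) = mu0 A * Q (nbhd_set DX x0 gamma `*` setT)].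
End generic.

Definition convex_prob_set {d : measure_display} {T : measurableType d}
  {R : realType} (S : set (probability T R)) :=
  forall (mu0 mu1 nu : probability T R) (lam : R),
    0 <= lam <= 1 -> S mu0 -> S mu1 ->
    (forall A, measurable A ->
       nu A = (lam%:E * mu0 A + (1 - lam)%:E * mu1 A)%E) ->
    S nu.

(* Main.v *)
Require Import Defs.
From HB Require Import structures.
From mathcomp Require Import all_boot all_order all_algebra.
From mathcomp Require Import all_classical all_reals all_analysis ess_sup_inf.
From mathcomp Require Import ring lra.
Import Order.TTheory GRing.Theory Num.Theory.
Import numFieldNormedType.Exports.
Local Open Scope classical_set_scope.
Local Open Scope ring_scope.

Definition clamp {R : realType} (a : R) : R := Num.min 1 (Num.max 0 a).

Lemma clamp_ge0 {R : realType} (a : R) : 0 <= clamp a.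
Proof. by rewrite /clamp le_min ler01 le_max lexx. Qed.
Lemma clamp_le1 {R : realType} (a : R) : clamp a <= 1.
Proof. by rewrite /clamp ge_min lexx. Qed.
Lemma clampE {R : realType} (a : R) : 0 <= a <= 1 -> clamp a = a.
Proof.
case/andP=> a0 a1; rewrite /clamp (_ : Num.max 0 a = a); last by apply/max_idPr.
by apply/min_idPr.
Qed.

Section mix.
Context d (T : measurableType d) (R : realType).
Variables (P Q : probability T R) (a : R).
Local Open Scope ereal_scope.
Definition mix (A : set T) : \bar R :=
  (clamp a)%:E * P A + (1 - clamp a)%:E * Q A.

Let ha0 := clamp_ge0 a.
Let h1a : (0 <= 1 - clamp a)%R. Proof. by rewrite subr_ge0 clamp_le1. Qed.

Let mix0 : mix set0 = 0. Proof. by rewrite /mix !measure0 !mule0 adde0. Qed.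
Let mix_ge0 A : 0 <= mix A.
Proof. by rewrite /mix adde_ge0 // mule_ge0 // lee_fin. Qed.
Let mix_sig : semi_sigma_additive mix.
Proof.
rewrite (_ : mix = measure_add (mscale (NngNum ha0) P) (mscale (NngNum h1a) Q)).
  exact: measure_semi_sigma_additive.
by apply/funext => A; rewrite measure_addE.
Qed.
HB.instance Definition _ := isMeasure.Build _ _ _ mix mix0 mix_ge0 mix_sig.
Let mixT : mix setT = 1.
Proof. by rewrite /mix !probability_setT !mule1 -EFinD subrKC. Qed.
HB.instance Definition _ := Measure_isProbability.Build _ _ _ mix mixT.

Lemma mixE A : mix A = (clamp a)%:E * P A + (1 - clamp a)%:E * Q A.
Proof. by []. Qed.

Lemma mix_ae (S : set T) :
  almost_everywhere P S -> almost_everywhere Q S -> almost_everywhere mix S.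
Proof.
move=> [B0 [mB0 B00 sB0]] [B1 [mB1 B10 sB1]].
exists (B0 `&` B1); split => //; first exact: measurableI.
  have h0 : P (B0 `&` B1) = 0.
    by apply/eqP; rewrite -measure_le0 -B00 le_measure // ?inE //; apply: measurableI.
  have h1 : Q (B0 `&` B1) = 0.
    by apply/eqP; rewrite -measure_le0 -B10 le_measure // ?inE //; apply: measurableI.
  by rewrite /mix h0 h1 !mule0 adde0.
by move=> x Sx; split; [apply: sB0|apply: sB1].
Qed.
End mix.
Arguments mix {d T R}.

Section winf.
Context {d1 d2 : measure_display} {X : measurableType d1} {Y : measurableType d2}
  {R : realType}.
Local Open Scope ereal_scope.

Lemma ess_sup_lt_ae (pi : probability ((X * Y) * (X * Y))%type R) f (t : \bar R) :
  ess_sup pi f < t -> \forall x \ae pi, f x <= t.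
Proof.
move=> /ereal_inf_lt [y /= hy yt].
by apply: filterS hy => x /= h; apply: le_trans h (ltW yt).
Qed.

Lemma Winf_mix (D : X * Y -> X * Y -> R) (rho : R) (P : set (X * Y) -> \bar R)
  (Q0 Q1 : probability (X * Y)%type R) (a : R) :
  Winf D Q0 P <= rho%:E -> Winf D Q1 P <= rho%:E ->
  Winf D (mix Q0 Q1 a) P <= rho%:E.
Proof.
move=> h0 h1; apply/lee_addgt0Pr => e e0.
have lt0 : Winf D Q0 P < (rho + e)%:E by apply: le_lt_trans h0 _; rewrite lte_fin ltrDl.
have lt1 : Winf D Q1 P < (rho + e)%:E by apply: le_lt_trans h1 _; rewrite lte_fin ltrDl.
move: lt0 => /ereal_inf_lt [z0 [pi0 c0 <-] l0].
move: lt1 => /ereal_inf_lt [z1 [pi1 c1 <-] l1].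
apply: le_trans (ereal_inf_lbound _) _; first exists (mix pi0 pi1 a).
  move=> A mA /=; have [e0A e0B] := c0 A mA; have [e1A e1B] := c1 A mA.
  split=> /=.
    by rewrite /mix -e0A -e1A.
  rewrite /mix; transitivity ((clamp a)%:E * P A + (1 - clamp a)%:E * P A).
    by rewrite -{1}e0B -{1}e1B.
  rewrite -ge0_muleDl ?lee_fin ?clamp_ge0 ?subr_ge0 ?clamp_le1 //.
  by rewrite -EFinD subrKC mul1e.
  reflexivity.
rewrite -EFinD; apply: ereal_inf_lbound => /=.
apply: mix_ae; [exact: ess_sup_lt_ae l0 | exact: ess_sup_lt_ae l1].
Qed.
End winf.
Lemma arith_E (R : realType) (a r0 r1 m0 m1 l : R) :
  a * (m0 * r0) + (1 - a) * (m1 * r1) = (l * m0 + (1 - l) * m1) * (a * r0 + (1 - a) * r1) ->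
  (a%:E * (m0%:E * r0%:E) + (1 - a)%:E * (m1%:E * r1%:E))%E =
  ((l%:E * m0%:E + (1 - l)%:E * m1%:E) * (a%:E * r0%:E + (1 - a)%:E * r1%:E))%E.
Proof. by move=> h; rewrite -!EFinM -!EFinD h. Qed.

Theorem lemma5 (R : realType) (n m : nat)
  (Xs : set 'rV[R]_n) (Ys : set 'rV[R]_m)
  (x0 : 'rV[R]_n) (hx0 : x0 \in Xs) (y0 : 'rV[R]_m) (hy0 : y0 \in Ys)
  (DX : psub hx0 -> psub hx0 -> R) (DY : psub hy0 -> psub hy0 -> R)
  (hDX : is_metric DX) (hDY : is_metric DY)
  (cDX : continuous (fun p : psub hx0 * psub hx0 => DX p.1 p.2))
  (cDY : continuous (fun p : psub hy0 * psub hy0 => DY p.1 p.2))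
  (N : nat) (data : 'I_N -> (borel_type (psub hx0) * borel_type (psub hy0))%type)
  (rho : R) (gamma : R) :
  0 <= rho -> 0 <= gamma ->
  convex_prob_set
    (cond_ambiguity (X := borel_type (psub hx0)) (Y := borel_type (psub hy0))
       DX (exist _ x0 hx0) gamma
       (Winf_ball (fun xi1 xi2 : (borel_type (psub hx0) * borel_type (psub hy0))%type =>
                      DX xi1.1 xi2.1 + DY xi1.2 xi2.2) rho
          (empirical data))).
Proof.
move=> rho0 gamma0 mu0 mu1 nu lam /andP[l0 l1].
set x0' : psub hx0 := exist _ x0 hx0.
set Nb := nbhd_set (X := borel_type (psub hx0)) DX x0' gamma.
have mNb : measurable (Nb : set (borel_type (psub hx0))).
  have cf : continuous (fun x : psub hx0 => DX x x0').
    move=> x; exact: (@continuous2_cvg _ _ _ _ (nbhs x) _ id (fun=> x0') DX x x0' (cDX (x, x0')) cvg_id (cvg_cst x0')).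
  have cN : closed (Nb : set (psub hx0)).
    rewrite (_ : Nb = (fun x => DX x x0') @^-1` [set r | r <= gamma]) //.
    by move/continuous_closedP : cf; apply; exact: closed_le.
  rewrite -[Nb]setCK; apply: measurableC; apply: sub_sigma_algebra.
  exact: closed_openC.
move=> [Q0 [B0 [p0 e0]]] [Q1 [B1 [p1 e1]]] hnu.
have mS : measurable (Nb `*` (setT : set (borel_type (psub hy0)))).
  exact: measurableX mNb measurableT.
have E0 : Q0 (Nb `*` setT) = (fine (Q0 (Nb `*` setT)))%:E.
  by rewrite fineK //; apply: fin_num_measure.
have E1 : Q1 (Nb `*` setT) = (fine (Q1 (Nb `*` setT)))%:E.
  by rewrite fineK //; apply: fin_num_measure.
move: E0 E1 p0 p1 e0 e1; set r0 := fine _; set r1 := fine _ => E0 E1.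
rewrite E0 E1 !lte_fin => r0p r1p e0 e1.
set Dn := lam * r1 + (1 - lam) * r0.
have Dn0 : 0 < Dn.
  rewrite /Dn; have [->|lp] := eqVneq lam 0.
    by rewrite mul0r add0r subr0 mul1r.
  have : 0 < lam by rewrite lt0r lp.
  move=> lp'; apply: ltr_pwDl; rewrite ?mulr_gt0 ?mulr_ge0 ?subr_ge0 ?(ltW r0p) //.
set a := lam * r1 / Dn.
have a01 : 0 <= a <= 1.
  apply/andP; split; first by rewrite /a divr_ge0 ?mulr_ge0 // ltW.
  rewrite /a ler_pdivrMr // mul1r /Dn lerDl mulr_ge0 // ?subr_ge0 // ltW //.
have key : a * r0 + (1 - a) * r1 = r0 * r1 / Dn.
  rewrite /a /Dn.
  field; rewrite -/Dn; exact: lt0r_neq0.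
exists (mix Q0 Q1 a); split; first exact: Winf_mix.
split.
  rewrite [X in (_ < X)%E]mixE clampE //.
  rewrite (e0 setT measurableT) (e1 setT measurableT) !probability_setT !mul1e -!EFinM -EFinD lte_fin key.
  by rewrite divr_gt0 // mulr_gt0.
move=> A mA.
rewrite [X in X = _]mixE [X in _ = (_ * X)%E]mixE clampE // e0 // e1 // hnu // (e0 setT measurableT) (e1 setT measurableT) !probability_setT !mul1e.
have m0 : mu0 A \is a fin_num by apply: fin_num_measure.
have m1 : mu1 A \is a fin_num by apply: fin_num_measure.
rewrite -(fineK m0) -(fineK m1).
apply: arith_E.
rewrite /a /Dn; field; rewrite -/Dn; exact: lt0r_neq0.
Qed.
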